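(* Let $K$ be any local field with ring of integers $\mathcal O$, residue field $\mathbf F$, and $q=\#\mathbf F$. Let $(H_n)_{n\ge1}$ be a sequence of open subgroups of $\mathcal O$ with $H_{n+1}\subseteq H_n$ and $\bigcap_n H_n=0$. Suppose $e_0,e_1,e_2,\dots\in C(\mathcal O,K)$ each map $\mathcal O$ into $\mathcal O$, and that for every $n\ge1$ the reductions $\overline e_0,\dots,\overline e_{n-1}\in C(\mathcal O,\mathbf F)$ are constant on cosets of $H_n$ and the induced map $\mathcal O/H_n\to\mathbf F^n$, $x\mapsto(\overline e_0(x),\dots,\overline e_{n-1}(x))$, is bijective (so $\#\mathcal O/H_n=q^n$). Then the extension of $(e_j)$ by $q$-digit expansions is an orthonormal basis of $C(\mathcal O,K)$.
   Context: A local field is a field complete with respect to a nontrivial discrete nonarchimedean absolute value with finite residue field. $C(\mathcal O,K)$ is the $K$-Banach space of continuous functions $\mathcal O\to K$ with the sup-norm; $C(\mathcal O,\mathbf F)$ is the space of continuous (i.e. locally constant) maps to the discrete field $\mathbf F$; $\overline e$ denotes $e$ composed with reduction $\mathcal O\to\mathbf F$. An orthonormal basis of a $K$-Banach space $E$ is a sequence $\{f_n\}$ such that each $x\in E$ is $x=\sum c_nf_n$ with $c_n\in K$, $c_n\to0$, $\|x\|=\max|c_n|$. Extension by $q$-digits: for $i=c_0+c_1q+\dots+c_{n-1}q^{n-1}$ with $0\le c_j\le q-1$, set $f_i=e_0^{c_0}\cdots e_{n-1}^{c_{n-1}}$ (pointwise products, $e_j^0=1$). *)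

(* Defs.v *)
From HB Require Import structures.
From mathcomp Require Import all_boot all_order all_algebra all_field.
From mathcomp Require Import boolp classical_sets reals.
Set Implicit Arguments. Unset Strict Implicit. Unset Printing Implicit Defensive.
Import Order.TTheory GRing.Theory Num.Theory.
Local Open Scope ring_scope.
Local Open Scope classical_set_scope.

Section LocalField.
Variables (R : realType) (K : fieldType) (abs : K -> R).

Definition nonarch_abs : Prop :=
  [/\ (forall x, 0 <= abs x), (forall x, abs x = 0 <-> x = 0),
      (forall x y, abs (x * y) = abs x * abs y) &
      (forall x y, abs (x + y) <= Num.max (abs x) (abs y))].

Definition discrete_nontrivial_abs : Prop :=
  exists pi : K, 0 < abs pi < 1 /\
    forall x, x != 0 -> exists z : int, abs x = abs pi ^ z.

Definition abs_cauchy (u : nat -> K) : Prop :=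
  forall eps : R, 0 < eps -> exists N : nat, forall m n : nat,
    (N <= m)%N -> (N <= n)%N -> abs (u m - u n) < eps.

Definition abs_converges (u : nat -> K) (l : K) : Prop :=
  forall eps : R, 0 < eps -> exists N : nat, forall n : nat,
    (N <= n)%N -> abs (u n - l) < eps.

Definition abs_complete : Prop :=
  forall u : nat -> K, abs_cauchy u -> exists l, abs_converges u l.

Definition intO : set K := [set x | abs x <= 1].

Definition residue_map (F : fieldType) (red : K -> F) : Prop :=
  [/\ (forall x y, intO x -> intO y -> red (x + y) = red x + red y),
      (forall x y, intO x -> intO y -> red (x * y) = red x * red y),
      red 1 = 1,
      (forall a : F, exists2 x, intO x & red x = a) &
      (forall x, intO x -> (red x = 0 <-> abs x < 1))].

Definition local_field (F : finFieldType) (red : K -> F) : Prop :=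
  [/\ nonarch_abs, discrete_nontrivial_abs, abs_complete & residue_map red].

Definition open_subgroup_O (H : set K) : Prop :=
  [/\ H `<=` intO, H 0, (forall x y, H x -> H y -> H (x - y)) &
      (forall x, H x -> exists2 d : R, 0 < d &
          forall y, abs (y - x) < d -> H y)].

(* continuity on O of a function O -> K (represented as K -> K) *)
Definition cont_on_O (g : K -> K) : Prop :=
  forall x, intO x -> forall eps : R, 0 < eps -> exists2 d : R, 0 < d &
    forall y, intO y -> abs (y - x) < d -> abs (g y - g x) < eps.

Definition sup_norm (g : K -> K) : R := sup [set abs (g x) | x in intO].

Definition orthonormal_basis (f : nat -> K -> K) : Prop :=
  (forall n, cont_on_O (f n)) /\
  forall g, cont_on_O g -> exists c : nat -> K,
    [/\ abs_converges c 0,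
        (forall eps : R, 0 < eps -> exists N : nat, forall m : nat, (N <= m)%N ->
            forall x, intO x -> abs (g x - \sum_(n < m) c n * f n x) < eps) &
        sup_norm g = sup [set abs (c n) | n in [set: nat]]].

End LocalField.

(* extension by q-digits: f_i = prod_j e_j ^ (j-th q-digit of i);
   digits beyond position i vanish, so the product over j < i suffices *)
Definition digit_ext (K : fieldType) (q : nat) (e : nat -> K -> K) (i : nat)
  (x : K) : K := \prod_(j < i) e j x ^+ ((i %/ q ^ j) %% q).

(* Main.v *)
Require Import Defs.
From HB Require Import structures.
From mathcomp Require Import all_boot all_order all_algebra all_field.
From mathcomp Require Import boolp classical_sets reals.
From mathcomp Require Import ring lra.
Import Order.TTheory GRing.Theory Num.Theory.
Local Open Scope ring_scope.
Local Open Scope classical_set_scope.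
Set Implicit Arguments. Unset Strict Implicit. Unset Printing Implicit Defensive.

Lemma sum_stable (V : nmodType) (G : nat -> V) N M :
  (forall i, (N <= i)%N -> G i = 0) -> (N <= M)%N ->
  \sum_(i < M) G i = \sum_(i < N) G i.
Proof.
move=> hG hNM; rewrite -(subnK hNM); elim: (M - N)%N => [|d IH]; first by rewrite add0n.
by rewrite addSn big_ord_recr /= IH hG ?addr0 // leq_addl.
Qed.

Lemma prod_stable (T : comNzRingType) (G : nat -> T) N M :
  (forall i, (N <= i)%N -> G i = 1) -> (N <= M)%N ->
  \prod_(i < M) G i = \prod_(i < N) G i.
Proof.
move=> hG hNM; rewrite -(subnK hNM); elim: (M - N)%N => [|d IH]; first by rewrite add0n.
by rewrite addSn big_ord_recr /= IH hG ?mulr1 // leq_addl.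
Qed.

Lemma sum_reindex (V : nmodType) (Phi : nat -> V) Q m :
  \sum_(i < Q * m) Phi i = \sum_(c < m) \sum_(i < Q) Phi (i + c * Q)%N.
Proof.
elim: m => [|m IH]; first by rewrite muln0 !big_ord0.
rewrite mulnS addnC big_split_ord /= IH big_ord_recr /=; congr (_ + _).
by apply: eq_bigr => i _; rewrite mulnC addnC.
Qed.

Section Alg.
Variable F : finFieldType.
Local Notation q := #|F|.

Lemma q_gt1 : (1 < q)%N. Proof. exact: card_finNzRing_gt1. Qed.
Lemma q_gt0 : (0 < q)%N. Proof. exact: ltnW q_gt1. Qed.

Definition dig (i j : nat) : nat := ((i %/ q ^ j) %% q)%N.

Definition bfr (n i : nat) (r : nat -> F) : F := \prod_(j < n) r j ^+ dig i j.

Lemma dig_big i j : (i < q ^ j)%N -> dig i j = 0%N.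
Proof. by move=> h; rewrite /dig divn_small // mod0n. Qed.

Lemma dig_low i c n j : (j < n)%N -> dig (i + c * q ^ n) j = dig i j.
Proof.
move=> jn; rewrite /dig.
have e : (q ^ n = (q ^ (n - j).-1 * q) * q ^ j)%N.
  rewrite -expnSr prednK ?subn_gt0 // -expnD subnK //; exact: ltnW.
rewrite e addnC mulnA divnMDl ?expn_gt0 ?q_gt0 //.
by rewrite mulnA modnMDl.
Qed.

Lemma dig_top i c n : (i < q ^ n)%N -> (c < q)%N -> dig (i + c * q ^ n) n = c.
Proof.
move=> hi hc; rewrite /dig addnC divnMDl ?expn_gt0 ?q_gt0 // divn_small // addn0.
exact: modn_small.
Qed.

Lemma bfr_step n i c r : (i < q ^ n)%N -> (c < q)%N ->
  bfr n.+1 (i + c * q ^ n) r = bfr n i r * r n ^+ c.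
Proof.
move=> hi hc; rewrite /bfr big_ord_recr /= dig_top //; congr (_ * _).
by apply: eq_bigr => j _; rewrite dig_low.
Qed.

Lemma unit_pow x : x != 0 -> x ^+ q.-1 = 1 :> F.
Proof.
move=> x0; have := expf_card x; rewrite -(prednK q_gt0) exprS => h.
by apply: (mulfI x0); rewrite h mulr1.
Qed.

Lemma interp (a : F) : exists g : nat -> F, forall s : F,
  (s == a)%:R = \sum_(c < q) g c * s ^+ c.
Proof.
pose p : {poly F} := 1 - ('X - a%:P) ^+ q.-1.
have sp : (size p <= q)%N.
  apply: leq_trans (size_polyD _ _) _; rewrite size_polyN size_exp_XsubC prednK ?q_gt0 //.
  by rewrite size_poly1 geq_max q_gt0 leqnn.
exists (fun c => p`_c) => s; rewrite -(horner_coef_wide _ sp) /p.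
rewrite hornerD hornerN horner_exp hornerXsubC hornerC.
have [->|sa] := eqVneq s a.
  by rewrite subrr expr0n -subn1 subn_eq0 leqNgt q_gt1 subr0.
by rewrite unit_pow ?subrr // subr_eq0.
Qed.

Lemma rep_delta n (t : nat -> F) : exists beta : nat -> F, forall r : nat -> F,
  \prod_(j < n) ((r j == t j)%:R : F) = \sum_(i < q ^ n) beta i * bfr n i r.
Proof.
elim: n => [|n [beta IH]].
  exists (fun _ => 1) => r; rewrite big_ord0 expn0 big_ord1 /bfr big_ord0; ring.
have [g hg] := interp (t n).
exists (fun i => g (i %/ q ^ n)%N * beta (i %% q ^ n)%N) => r.
rewrite big_ord_recr /= IH hg expnSr.
rewrite (sum_reindex (fun i => g (i %/ q ^ n)%N * beta (i %% q ^ n)%N * bfr n.+1 i r)) mulr_sumr.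
apply: eq_bigr => c _; rewrite mulr_suml; apply: eq_bigr => i _.
have hi : (i < q ^ n)%N by [].
rewrite bfr_step // addnC divnMDl ?expn_gt0 ?q_gt0 // divn_small // addn0.
rewrite modnMDl modn_small //; ring.
Qed.

End Alg.

Section Ultra.
Variables (R : realType) (K : fieldType) (abs : K -> R).
Hypothesis Hna : nonarch_abs abs.

Lemma abs_ge0 x : 0 <= abs x. Proof. by case: Hna. Qed.
Lemma abs_eq0 x : abs x = 0 <-> x = 0. Proof. by case: Hna. Qed.
Lemma abs0 : abs 0 = 0. Proof. by apply/abs_eq0. Qed.
Lemma absM x y : abs (x * y) = abs x * abs y. Proof. by case: Hna. Qed.
Lemma abs_max x y : abs (x + y) <= Num.max (abs x) (abs y). Proof. by case: Hna. Qed.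

Lemma abs1 : abs 1 = 1.
Proof.
have h := absM 1 1; rewrite mulr1 in h.
have h0 : abs 1 != 0 by apply/eqP => /abs_eq0 /eqP; rewrite oner_eq0.
by apply: (mulfI h0); rewrite -h mulr1.
Qed.

Lemma absN1 : abs (-1) = 1.
Proof.
have h := absM (-1) (-1); rewrite mulrNN mulr1 abs1 in h.
have h0 := abs_ge0 (-1).
have : (abs (-1) - 1) * (abs (-1) + 1) = 0 by rewrite mulrDr mulrBl -h; ring.
move/eqP; rewrite mulf_eq0 => /orP [/eqP|/eqP]; first by move/eqP; rewrite subr_eq0 => /eqP.
move=> e; have : 0 < abs (-1) + 1 by rewrite ltr_wpDl.
by rewrite e ltxx.
Qed.

Lemma absN x : abs (- x) = abs x.
Proof. by rewrite -mulN1r absM absN1 mul1r. Qed.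

Lemma absB x y : abs (x - y) = abs (y - x).
Proof. by rewrite -absN opprB. Qed.

Lemma absX x k : abs (x ^+ k) = abs x ^+ k.
Proof. by elim: k => [|k IH]; rewrite ?expr0 ?abs1 // !exprS absM IH. Qed.

Lemma absV x : x != 0 -> abs (x^-1) = (abs x)^-1.
Proof.
move=> x0; have h := absM x x^-1; rewrite mulfV // abs1 in h.
have ax : abs x != 0 by apply/eqP => /abs_eq0 /eqP; rewrite (negPf x0).
by apply: (mulfI ax); rewrite -h mulfV.
Qed.

Lemma abs_add_le x y B : abs x <= B -> abs y <= B -> abs (x + y) <= B.
Proof.
move=> hx hy; apply: le_trans (abs_max x y) _.
by rewrite ge_max hx hy.
Qed.

Lemma abs_add_lt x y B : abs x < B -> abs y < B -> abs (x + y) < B.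
Proof.
move=> hx hy; apply: le_lt_trans (abs_max x y) _.
by rewrite gt_max hx hy.
Qed.

Lemma abs_sub_le x y B : abs x <= B -> abs y <= B -> abs (x - y) <= B.
Proof. by move=> hx hy; apply: abs_add_le => //; rewrite absN. Qed.

Lemma abs_sub_lt x y B : abs x < B -> abs y < B -> abs (x - y) < B.
Proof. by move=> hx hy; apply: abs_add_lt => //; rewrite absN. Qed.

Lemma abs_dist_le x y z B : abs (x - y) <= B -> abs (y - z) <= B -> abs (x - z) <= B.
Proof. by move=> h1 h2; have := abs_add_le h1 h2; rewrite addrA subrK. Qed.

Lemma abs_dist_lt x y z B : abs (x - y) < B -> abs (y - z) < B -> abs (x - z) < B.
Proof. by move=> h1 h2; have := abs_add_lt h1 h2; rewrite addrA subrK. Qed.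

Lemma abs_add_eq x y : abs y < abs x -> abs (x + y) = abs x.
Proof.
move=> hyx; apply/le_anti/andP; split.
  by apply: abs_add_le => //; apply: ltW.
have e : x = (x + y) - y by rewrite addrK.
have := abs_max (x + y) (- y); rewrite -e absN.
rewrite le_max => /orP [//|h]; by move: (lt_le_trans hyx h); rewrite ltxx.
Qed.

Lemma abs_sum_le n (F : nat -> K) B : 0 <= B ->
  (forall i, (i < n)%N -> abs (F i) <= B) -> abs (\sum_(i < n) F i) <= B.
Proof.
move=> B0; elim: n => [|n IH] h; first by rewrite big_ord0 abs0.
rewrite big_ord_recr /=; apply: abs_add_le; last exact: h.
by apply: IH => i hi; apply: h; apply: ltnW.
Qed.

Lemma abs_sum_lt n (F : nat -> K) B : 0 < B ->
  (forall i, (i < n)%N -> abs (F i) < B) -> abs (\sum_(i < n) F i) < B.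
Proof.
move=> B0; elim: n => [|n IH] h; first by rewrite big_ord0 abs0.
rewrite big_ord_recr /=; apply: abs_add_lt; last exact: h.
by apply: IH => i hi; apply: h; apply: ltnW.
Qed.

End Ultra.

Section Local.
Variables (R : realType) (K : fieldType) (abs : K -> R) (F : finFieldType) (red : K -> F).
Variable pi : K.
Hypothesis Hna : nonarch_abs abs.
Hypothesis Hpi : 0 < abs pi < 1.
Hypothesis Hdisc : forall x, x != 0 -> exists z : int, abs x = abs pi ^ z.
Hypothesis Hcomp : abs_complete abs.
Hypothesis Hres : residue_map abs red.

Local Notation O := (intO abs).
Local Notation rho := (abs pi).

Lemma rho_gt0 : 0 < rho. Proof. by case/andP: Hpi. Qed.
Lemma rho_lt1 : rho < 1. Proof. by case/andP: Hpi. Qed.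
Lemma rho_ge0 : 0 <= rho. Proof. exact: ltW rho_gt0. Qed.
Lemma pi_neq0 : pi != 0.
Proof. by apply/eqP => e; move: rho_gt0; rewrite e abs0 // ltxx. Qed.

Lemma rhoX_ge0 k : 0 <= rho ^+ k. Proof. exact: exprn_ge0 rho_ge0. Qed.
Lemma rhoX_gt0 k : 0 < rho ^+ k. Proof. exact: exprn_gt0 rho_gt0. Qed.
Lemma rhoX_le1 k : rho ^+ k <= 1. Proof. exact: exprn_ile1 rho_ge0 (ltW rho_lt1). Qed.
Lemma rhoX_le k m : (k <= m)%N -> rho ^+ m <= rho ^+ k.
Proof. by move=> h; apply: ler_wiXn2l => //; [exact: rho_ge0 | exact: ltW rho_lt1]. Qed.

Lemma lt1_le_rho x : abs x < 1 -> abs x <= rho.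
Proof.
move=> h; have [->|x0] := eqVneq x 0; first by rewrite abs0 // rho_ge0.
have [z hz] := Hdisc x0; move: h; rewrite hz.
case: z {hz} => k /=.
  case: k => [|k]; first by rewrite expr0z ltxx.
  move=> _; rewrite exprSz. rewrite -[X in _ <= X]mulr1 ler_wpM2l ?rho_ge0 //.
  by rewrite -exprnP rhoX_le1.
rewrite NegzE -exprz_inv -exprnP => h; exfalso; move: h.
rewrite exprVn invf_lt1 ?rhoX_gt0 // ltNge.
by rewrite rhoX_le1.
Qed.

Lemma rhoX_small eps : 0 < eps -> exists k, rho ^+ k < eps.
Proof.
move=> e0; set y := rho^-1.
have y1 : 1 < y by rewrite /y invf_cp1 ?rho_gt0 ?rho_lt1.
have bern : forall k, 1 + k%:R * (y - 1) <= y ^+ k.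
  elim=> [|k IH]; first by rewrite expr0 mul0r addr0.
  rewrite exprS -natr1 mulrDl mul1r.
  have h1 : 1 + k%:R * (y - 1) + (y - 1) <= y * (1 + k%:R * (y - 1)).
    have k0 : 0 <= k%:R :> R by rewrite ler0n.
    have hh : 0 <= k%:R * ((y - 1) * (y - 1)) by rewrite mulr_ge0 // mulr_ge0 // subr_ge0 ltW.
    rewrite -subr_ge0; apply: le_trans hh _; rewrite le_eqVlt; apply/orP; left; apply/eqP; ring.
  rewrite addrA; apply: (le_trans h1).
  by rewrite ler_wpM2l ?(ltW (lt_trans ltr01 y1)).
set b := (eps * (y - 1))^-1.
have ym : 0 < y - 1 by rewrite subr_gt0.
have b0 : 0 <= b by rewrite /b invr_ge0 mulr_ge0 // ltW.
have := archi_boundP b0; set k := Num.Def.archi_bound b => hk.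
exists k.
have h2 : 1 < eps * (k%:R * (y - 1)).
  have hk' : b * (eps * (y - 1)) < k%:R * (eps * (y - 1)) by rewrite ltr_pM2r // mulr_gt0.
  rewrite /b mulVf ?(gt_eqF (mulr_gt0 e0 ym)) // in hk'; apply: lt_le_trans hk' _.
  by rewrite le_eqVlt; apply/orP; left; apply/eqP; ring.
have h3 : 1 < eps * y ^+ k.
  apply: lt_le_trans h2 _; rewrite ler_wpM2l ?ltW //.
  by apply: lt_le_trans _ (bern k); lra.
have ry : rho ^+ k * y ^+ k = 1 by rewrite -exprMn /y mulfV ?expr1n // gt_eqF // rho_gt0.
have rk := rhoX_gt0 k.
nra.
Qed.

Lemma geom_cauchy (u : nat -> K) : (forall k, abs (u k.+1 - u k) <= rho ^+ k) ->
  exists l, forall k, abs (l - u k) <= rho ^+ k.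
Proof.
move=> hu.
have hm : forall k m, abs (u (m + k)%N - u k) <= rho ^+ k.
  move=> k; elim=> [|m IH]; first by rewrite add0n subrr abs0 // rhoX_ge0.
  apply: abs_dist_le IH => //; rewrite addSn; apply: le_trans (hu _) _.
  by apply: rhoX_le; rewrite leq_addl.
have hmn : forall k m n, (k <= m)%N -> (k <= n)%N -> abs (u m - u n) <= rho ^+ k.
  move=> k m n km kn; apply: (@abs_dist_le _ _ _ Hna _ (u k)).
    by rewrite -(subnK km); apply: hm.
  by rewrite absB // -(subnK kn); apply: hm.
have [l hl] : exists l, abs_converges abs u l.
  apply: Hcomp => eps e0; have [k hk] := rhoX_small e0.
  by exists k => m n km kn; apply: le_lt_trans (hmn _ _ _ km kn) hk.
exists l => k; rewrite leNgt; apply/negP => hlt.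
have [N hN] := hl _ (lt_trans (rhoX_gt0 k) hlt).
have h1 : abs (l - u (maxn N k)) < abs (l - u k).
  by rewrite (absB Hna); apply: hN; exact: leq_maxl.
have h2 := hmn k (maxn N k) k (leq_maxr _ _) (leqnn _).
have := abs_dist_lt Hna h1 (le_lt_trans h2 hlt).
by rewrite ltxx.
Qed.


Lemma O0 : O 0. Proof. by rewrite /intO /= abs0 // ler01. Qed.
Lemma O1 : O 1. Proof. by rewrite /intO /= abs1. Qed.
Lemma OD x y : O x -> O y -> O (x + y).
Proof. by rewrite /intO /= => hx hy; apply: abs_add_le. Qed.
Lemma ON x : O x -> O (- x).
Proof. by rewrite /intO /= absN. Qed.
Lemma OB x y : O x -> O y -> O (x - y).
Proof. by move=> hx hy; apply: OD => //; apply: ON. Qed.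
Lemma OM x y : O x -> O y -> O (x * y).
Proof. by rewrite /intO /= absM // => hx hy; apply: mulr_ile1 => //; apply: abs_ge0. Qed.
Lemma OX x k : O x -> O (x ^+ k).
Proof. by move=> hx; elim: k => [|k IH]; [rewrite expr0; exact: O1 | rewrite exprS; exact: OM]. Qed.
Lemma O_sum n (G : nat -> K) : (forall i, (i < n)%N -> O (G i)) -> O (\sum_(i < n) G i).
Proof. by move=> h; rewrite /intO /=; apply: (abs_sum_le Hna) => //; rewrite ler01. Qed.
Lemma O_prod n (G : nat -> K) : (forall i, (i < n)%N -> O (G i)) -> O (\prod_(i < n) G i).
Proof.
elim: n => [|n IH] h; first by rewrite big_ord0; exact: O1.
by rewrite big_ord_recr /=; apply: OM; [apply: IH => i hi; apply: h; apply: ltnW | apply: h].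
Qed.

Lemma redD x y : O x -> O y -> red (x + y) = red x + red y. Proof. by case: Hres => h _ _ _ _; apply: h. Qed.
Lemma redM x y : O x -> O y -> red (x * y) = red x * red y. Proof. by case: Hres => _ h _ _ _; apply: h. Qed.
Lemma red1 : red 1 = 1. Proof. by case: Hres. Qed.
Lemma red_surj a : exists2 x, O x & red x = a. Proof. by case: Hres => _ _ _ h _; apply: h. Qed.
Lemma red_small x : O x -> (red x = 0 <-> abs x < 1). Proof. by case: Hres => _ _ _ _; apply. Qed.

Lemma red0 : red 0 = 0.
Proof. have := redD O0 O0; rewrite addr0 => h; by apply: (addrI (red 0)); rewrite -h addr0. Qed.
Lemma redN x : O x -> red (- x) = - red x.
Proof.
move=> hx; apply: (addrI (red x)); rewrite -redD //; last exact: ON.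
by rewrite !subrr red0.
Qed.
Lemma redB x y : O x -> O y -> red (x - y) = red x - red y.
Proof. by move=> hx hy; rewrite redD //; [rewrite redN | exact: ON]. Qed.
Lemma redX x k : O x -> red (x ^+ k) = red x ^+ k.
Proof. by move=> hx; elim: k => [|k IH]; [rewrite !expr0 red1 | rewrite !exprS redM; [by rewrite IH | done | exact: OX]]. Qed.
Lemma red_sum n (G : nat -> K) : (forall i, (i < n)%N -> O (G i)) ->
  red (\sum_(i < n) G i) = \sum_(i < n) red (G i).
Proof.
elim: n => [|n IH] h; first by rewrite !big_ord0 red0.
have h' : forall i, (i < n)%N -> O (G i) by move=> i hi; apply: h; apply: ltnW.
rewrite !big_ord_recr /= redD; [by rewrite IH | exact: O_sum | exact: h].
Qed.
Lemma red_prod n (G : nat -> K) : (forall i, (i < n)%N -> O (G i)) ->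
  red (\prod_(i < n) G i) = \prod_(i < n) red (G i).
Proof.
elim: n => [|n IH] h; first by rewrite !big_ord0 red1.
have h' : forall i, (i < n)%N -> O (G i) by move=> i hi; apply: h; apply: ltnW.
rewrite !big_ord_recr /= redM; [by rewrite IH | exact: O_prod | exact: h].
Qed.
Lemma red_eqP x y : O x -> O y -> (red x = red y <-> abs (x - y) < 1).
Proof.
move=> hx hy; have hs := red_small (OB hx hy); rewrite redB // in hs; split => h.
  by apply/hs; rewrite h subrr.
by move/hs/eqP: h; rewrite subr_eq0 => /eqP.
Qed.

Lemma lift_ex : exists lift : F -> K, forall a, O (lift a) /\ red (lift a) = a.
Proof.
have h : forall a : F, exists x, O x /\ red x = a by move=> a; have [x hx hr] := red_surj a; exists x.
by have [lift hl] := choice h; exists lift.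
Qed.

Lemma compact_O (d : K -> R) : (forall x, O x -> 0 < d x) ->
  exists xs : seq K, (forall x, x \in xs -> O x) /\
    forall y, O y -> exists2 x, x \in xs & abs (y - x) < d x.
Proof.
move=> dpos; have [lift hlift] := lift_ex.
pose bad a k := ~ exists xs : seq K, (forall x, x \in xs -> O x) /\
    forall y, O y -> abs (y - a) <= rho ^+ k -> exists2 x, x \in xs & abs (y - x) < d x.
have Osub : forall a k s, O a -> O (a + pi ^+ k * lift s).
  move=> a k s Oa; apply: OD => //; apply: OM; last by case: (hlift s).
  by apply: OX; rewrite /intO /= ltW // rho_lt1.
have step : forall a k, O a -> bad a k -> exists s, bad (a + pi ^+ k * lift s) k.+1.
  move=> a k Oa hb; apply: contrapT => hn.
  have hs : forall s, exists xs : seq K, (forall x, x \in xs -> O x) /\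
      forall y, O y -> abs (y - (a + pi ^+ k * lift s)) <= rho ^+ k.+1 ->
        exists2 x, x \in xs & abs (y - x) < d x.
    by move=> s; apply: contrapT => h; apply: hn; exists s.
  have [XS hXS] := choice hs.
  apply: hb; exists (flatten [seq XS s | s <- enum F]); split.
    by move=> x /flatten_mapP [s _ hx]; case: (hXS s) => h _; apply: h.
  move=> y Oy hy.
  have pk0 : pi ^+ k != 0 by rewrite expf_neq0 // pi_neq0.
  set z := (y - a) / pi ^+ k.
  have ez : y - a = pi ^+ k * z by rewrite /z mulrC divfK.
  have Oz : O z.
    rewrite /intO /= /z absM // absV // absX // ler_pdivrMr ?rhoX_gt0 // mul1r.
    by [].
  have [Or rr] := hlift (red z).
  have hzr : abs (z - lift (red z)) <= rho.
    by apply: lt1_le_rho; apply/red_eqP.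
  have hbd : abs (y - (a + pi ^+ k * lift (red z))) <= rho ^+ k.+1.
    have -> : y - (a + pi ^+ k * lift (red z)) = pi ^+ k * (z - lift (red z)).
      by rewrite mulrBr -ez; ring.
    by rewrite absM // absX // exprSr ler_wpM2l // rhoX_ge0.
  have [x hx hyx] := (hXS (red z)).2 y Oy hbd.
  by exists x => //; apply/flatten_mapP; exists (red z) => //; rewrite mem_enum.
have hnext : forall p : K * nat, exists b, (O p.1 /\ bad p.1 p.2) ->
    [/\ O b, bad b p.2.+1 & abs (b - p.1) <= rho ^+ p.2].
  move=> [a k] /=; case: (pselect (O a /\ bad a k)) => [[Oa hb]|hn]; last first.
    by exists a.
  have [s hs] := step a k Oa hb; exists (a + pi ^+ k * lift s) => _; split => //.
    exact: Osub.
  have -> : a + pi ^+ k * lift s - a = pi ^+ k * lift s by ring.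
  rewrite absM // absX //; rewrite -[X in _ <= X]mulr1 ler_wpM2l ?rhoX_ge0 //.
  by case: (hlift s).
have [nxt hnxt] := choice hnext.
pose u := nat_rect (fun _ => K) 0 (fun k a => nxt (a, k)).
have uS : forall k, u k.+1 = nxt (u k, k) by [].
apply: contrapT => hall.
have hb0 : bad 0 0.
  move=> [xs [hxs hc]]; apply: hall; exists xs; split => // y Oy; apply: hc => //.
  by rewrite subr0 expr0.
have hu : forall k, O (u k) /\ bad (u k) k.
  elim=> [|k [Ouk hbk]]; first by split => //; exact: O0.
  by have [] := hnxt (u k, k) (conj Ouk hbk); rewrite -uS.
have hd : forall k, abs (u k.+1 - u k) <= rho ^+ k.
  by move=> k; have [] := hnxt (u k, k) (hu k); rewrite -uS.
have [l hl] := geom_cauchy hd.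
have Ol : O l.
  have := hl 0%N; rewrite expr0 => h0.
  by rewrite /intO /=; have := abs_add_le Hna h0 (hu 0%N).1; rewrite subrK.
have [k hk] := rhoX_small (dpos _ Ol).
apply: (hu k).2; exists [:: l]; split; first by move=> x; rewrite inE => /eqP ->.
move=> y Oy hy; exists l; first by rewrite inE.
apply: le_lt_trans hk; apply: abs_dist_le hy _ => //.
by rewrite absB // hl.
Qed.


Variables (H : nat -> set K) (e : nat -> K -> K).
Hypothesis HH : forall n, (1 <= n)%N -> open_subgroup_O abs (H n).
Hypothesis Hdec : forall n, (1 <= n)%N -> H n.+1 `<=` H n.
Hypothesis Hcap : forall x, (forall n, (1 <= n)%N -> H n x) <-> x = 0.
Hypothesis He : forall j, cont_on_O abs (e j) /\ (forall x, intO abs x -> intO abs (e j x)).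
Hypothesis Hbij : forall n, (1 <= n)%N ->
     [/\ (forall x y, intO abs x -> intO abs y -> H n (x - y) ->
            forall j, (j < n)%N -> red (e j x) = red (e j y)),
         (forall x y, intO abs x -> intO abs y ->
            (forall j, (j < n)%N -> red (e j x) = red (e j y)) -> H n (x - y)) &
         (forall t : 'I_n -> F, exists2 x, intO abs x &
            forall j : 'I_n, red (e j x) = t j)].

Lemma H_mono n m : (1 <= n)%N -> (n <= m)%N -> H m `<=` H n.
Proof.
move=> n1; elim: m => [|m IH] nm; first by move: (leq_trans n1 nm).
rewrite leq_eqVlt in nm; case/orP: nm => [/eqP -> //|nm].
move=> x hx; apply: IH => //; exact: (Hdec (leq_trans n1 nm)) hx.
Qed.

Lemma min_ex (xs : seq K) (d : K -> R) : (forall x, x \in xs -> 0 < d x) ->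
  exists2 eta, 0 < eta & forall x, x \in xs -> eta <= d x.
Proof.
elim: xs => [|y ys IH] h; first by exists 1.
have [eta e0 he] : exists2 eta, 0 < eta & forall x, x \in ys -> eta <= d x.
  by apply: IH => x hx; apply: h; rewrite inE hx orbT.
exists (Num.min (d y) eta); first by rewrite lt_min e0 h ?mem_head.
move=> x; rewrite inE => /orP [/eqP ->|hx]; rewrite ge_min ?lexx //.
by rewrite he ?orbT.
Qed.

Lemma H_shrink delta : 0 < delta -> exists2 n, (1 <= n)%N & forall h, H n h -> abs h < delta.
Proof.
move=> d0.
have hp : forall x, exists p : nat * R, (delta <= abs x) ->
    [/\ (1 <= p.1)%N, 0 < p.2 & forall y, abs (y - x) < p.2 -> ~ H p.1 y].
  move=> x; case: (pselect (delta <= abs x)) => hx; last by exists (0%N, 0).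
  have x0 : x <> 0 by move=> ex; move: hx; rewrite ex abs0 // leNgt d0.
  have [n [n1 nx]] : exists n, (1 <= n)%N /\ ~ H n x.
    apply: contrapT => hn; apply: x0; apply/Hcap => n n1; apply: contrapT => hnx.
    by apply: hn; exists n; split.
  have [_ H0 Hsub Hopen] := HH n1.
  have [d dpos hd] := Hopen 0 H0.
  exists (n, d) => _; split => // y hy Hy.
  apply: nx; have -> : x = y - (y - x) by ring.
  by apply: Hsub => //; apply: hd; rewrite subr0.
have [P hP] := choice hp.
pose d' x := if delta <= abs x then (P x).2 else delta.
have d'pos : forall x, O x -> 0 < d' x.
  by move=> x _; rewrite /d'; case: ifP => h //; have [] := hP x h.
have [xs [hxs hcov]] := compact_O d'pos.
exists (maxn 1 (\max_(x <- xs) (P x).1)); first exact: leq_maxl.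
move=> h hh.
have Oh : O h by have [hsub _ _ _] := HH (leq_maxl 1 (\max_(x <- xs) (P x).1)); exact: hsub.
have [x hx hhx] := hcov h Oh.
move: hhx; rewrite /d'; case: ifP => hdx hhx.
  have [n1 _ hnot] := hP x hdx; exfalso; apply: (hnot h hhx).
  apply: (H_mono n1 _ hh); apply: leq_trans (leq_maxr 1 _).
  exact: (@leq_bigmax_seq _ xs predT (fun x => (P x).1) x hx).
have hx' : abs x < delta by rewrite ltNge hdx.
by have := abs_add_lt Hna hhx hx'; rewrite subrK.
Qed.

Lemma unif_cont g eps : cont_on_O abs g -> 0 < eps -> exists2 eta, 0 < eta &
  forall x y, O x -> O y -> abs (x - y) < eta -> abs (g x - g y) < eps.
Proof.
move=> hg e0.
have hp : forall x, exists d, O x -> 0 < d /\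
    forall y, O y -> abs (y - x) < d -> abs (g y - g x) < eps.
  move=> x; case: (pselect (O x)) => Ox; last by exists 0.
  by have [d d0 hd] := hg x Ox eps e0; exists d.
have [D hD] := choice hp.
have [xs [hxs hcov]] := compact_O (fun x Ox => (hD x Ox).1).
have [eta eta0 heta] := @min_ex xs D (fun x hx => (hD x (hxs x hx)).1).
exists eta => // x y Ox Oy hxy.
have [z hz hxz] := hcov x Ox.
have [_ hDz] := hD z (hxs z hz).
have h1 := hDz x Ox hxz.
have h2 : abs (g y - g z) < eps.
  apply: hDz => //; apply: (abs_dist_lt Hna _ hxz); rewrite (absB Hna).
  exact: lt_le_trans hxy (heta z hz).
by apply: (abs_dist_lt Hna h1); rewrite (absB Hna).
Qed.

Lemma H_unif g eps : cont_on_O abs g -> 0 < eps -> exists2 n, (1 <= n)%N &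
  forall x y, O x -> O y -> H n (x - y) -> abs (g x - g y) < eps.
Proof.
move=> hg e0; have [eta eta0 heta] := unif_cont hg e0.
have [n n1 hn] := H_shrink eta0.
by exists n => // x y Ox Oy hxy; apply: heta => //; apply: hn.
Qed.


Lemma cont_ext g h : (forall x, g x = h x) -> cont_on_O abs g -> cont_on_O abs h.
Proof.
move=> egh hg x Ox eps e0; have [d d0 hd] := hg x Ox eps e0.
by exists d => // y Oy hy; rewrite -!egh; apply: hd.
Qed.

Lemma cont_const c : cont_on_O abs (fun _ => c).
Proof. by move=> x Ox eps e0; exists 1 => // y _ _; rewrite subrr abs0. Qed.

Lemma cont_add g h : cont_on_O abs g -> cont_on_O abs h -> cont_on_O abs (fun x => g x + h x).
Proof.
move=> hg hh x Ox eps e0; have [d1 d10 hd1] := hg x Ox eps e0.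
have [d2 d20 hd2] := hh x Ox eps e0.
exists (Num.min d1 d2); first by rewrite lt_min d10 d20.
move=> y Oy; rewrite lt_min => /andP [h1 h2].
have -> : g y + h y - (g x + h x) = (g y - g x) + (h y - h x) by ring.
by apply: abs_add_lt; [exact: Hna | apply: hd1 | apply: hd2].
Qed.

Lemma cont_scale c g : cont_on_O abs g -> cont_on_O abs (fun x => c * g x).
Proof.
move=> hg x Ox eps e0; set k := abs c + 1.
have k0 : 0 < k by rewrite /k ltr_wpDl ?abs_ge0.
have [d d0 hd] := hg x Ox (eps / k) (divr_gt0 e0 k0).
exists d => // y Oy hy; rewrite -mulrBr absM //.
have h1 := hd y Oy hy.
have h2 : abs c * abs (g y - g x) <= k * abs (g y - g x).
  by rewrite ler_wpM2r ?abs_ge0 // /k lerDl ler01.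
apply: le_lt_trans h2 _.
have : k * abs (g y - g x) < k * (eps / k) by rewrite ltr_pM2l.
by rewrite mulrCA mulfV ?gt_eqF // mulr1.
Qed.

Lemma cont_sub g h : cont_on_O abs g -> cont_on_O abs h -> cont_on_O abs (fun x => g x - h x).
Proof.
move=> hg hh; apply: (cont_ext (g := fun x => g x + (-1) * h x)).
  by move=> x; rewrite mulN1r.
by apply: cont_add => //; apply: cont_scale.
Qed.

Lemma cont_mul g h : cont_on_O abs g -> cont_on_O abs h ->
  (forall x, O x -> O (g x)) -> (forall x, O x -> O (h x)) ->
  cont_on_O abs (fun x => g x * h x).
Proof.
move=> hg hh Og Oh x Ox eps e0; have [d1 d10 hd1] := hg x Ox eps e0.
have [d2 d20 hd2] := hh x Ox eps e0.
exists (Num.min d1 d2); first by rewrite lt_min d10 d20.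
move=> y Oy; rewrite lt_min => /andP [h1 h2].
have -> : g y * h y - g x * h x = g y * (h y - h x) + (g y - g x) * h x by ring.
apply: abs_add_lt; first exact: Hna.
  rewrite absM //; apply: le_lt_trans (hd2 y Oy h2).
  by rewrite -[X in _ <= X]mul1r ler_wpM2r ?abs_ge0 //; apply: Og.
rewrite absM //; apply: le_lt_trans (hd1 y Oy h1).
by rewrite -[X in _ <= X]mulr1 ler_wpM2l ?abs_ge0 //; apply: Oh.
Qed.

Lemma cont_sum n (G : nat -> K -> K) : (forall i, (i < n)%N -> cont_on_O abs (G i)) ->
  cont_on_O abs (fun x => \sum_(i < n) G i x).
Proof.
elim: n => [|n IH] hG.
  by apply: (cont_ext (g := fun _ => 0)); [move=> x; rewrite big_ord0 | apply: cont_const].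
apply: (cont_ext (g := fun x => \sum_(i < n) G i x + G n x)).
  by move=> x; rewrite big_ord_recr.
apply: cont_add; last exact: hG.
by apply: IH => i hi; apply: hG; apply: ltnW.
Qed.

Lemma eprod_ok n (dd : nat -> nat) :
  cont_on_O abs (fun x => \prod_(j < n) e j x ^+ dd j) /\
  (forall x, O x -> O (\prod_(j < n) e j x ^+ dd j)).
Proof.
have pw : forall j k, cont_on_O abs (fun x => e j x ^+ k) /\ (forall x, O x -> O (e j x ^+ k)).
  move=> j; elim=> [|k [IH1 IH2]].
    split; last by move=> x _; rewrite expr0; exact: O1.
    by apply: (cont_ext (g := fun _ => 1)); [move=> x; rewrite expr0 | apply: cont_const].
  split; last by move=> x Ox; rewrite exprS; apply: OM; [apply: (He j).2 | apply: IH2].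
  apply: (cont_ext (g := fun x => e j x * e j x ^+ k)); first by move=> x; rewrite exprS.
  by apply: cont_mul => //; [exact: (He j).1 | exact: (He j).2].
elim: n => [|n [IH1 IH2]].
  split; last by move=> x _; rewrite big_ord0; exact: O1.
  by apply: (cont_ext (g := fun _ => 1)); [move=> x; rewrite big_ord0 | apply: cont_const].
split; last by move=> x Ox; rewrite big_ord_recr /=; apply: OM; [apply: IH2 | apply: (pw n _).2].
apply: (cont_ext (g := fun x => (\prod_(j < n) e j x ^+ dd j) * e n x ^+ dd n)).
  by move=> x; rewrite big_ord_recr.
by apply: cont_mul => //; [exact: (pw n _).1 | exact: (pw n _).2].
Qed.

Local Notation q := #|F|.
Local Notation f := (digit_ext #|F| e).

Lemma f_cont i : cont_on_O abs (f i).
Proof. exact: (eprod_ok i (fun j => (i %/ q ^ j) %% q)%N).1. Qed.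

Lemma f_O i x : O x -> O (f i x).
Proof. exact: (eprod_ok i (fun j => (i %/ q ^ j) %% q)%N).2. Qed.

Lemma red_f i n x : O x -> (i < q ^ n)%N -> red (f i x) = bfr n i (fun j => red (e j x)).
Proof.
move=> Ox hi; rewrite /digit_ext (@red_prod i (fun j => e j x ^+ ((i %/ q ^ j) %% q)%N)); last first.
  by move=> j _; apply: OX; apply: (He j).2.
rewrite /bfr.
have h1 : forall j, (minn i n <= j)%N -> red (e j x ^+ ((i %/ q ^ j) %% q)) = 1.
  move=> j hj; rewrite redX; last exact: (He j).2.
  suff -> : ((i %/ q ^ j) %% q = 0)%N by rewrite expr0.
  apply: (@dig_big F); rewrite geq_min in hj; case/orP: hj => hj.
    by apply: leq_trans (ltn_expl _ (q_gt1 F)) _; rewrite leq_exp2l // q_gt1.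
  by apply: leq_trans hi _; rewrite leq_exp2l // q_gt1.
have h2 : forall j, (minn i n <= j)%N -> red (e j x) ^+ (@dig F i j) = 1.
  move=> j hj; rewrite -redX; [exact: h1 | exact: (He j).2].
rewrite (prod_stable h1 (geq_minl i n)) (prod_stable h2 (geq_minr i n)).
by apply: eq_bigr => j _; rewrite redX //; apply: (He j).2.
Qed.


Lemma L1 h : cont_on_O abs h -> (forall x, O x -> O (h x)) ->
  exists N, exists a : nat -> K, [/\ (forall i, O (a i)), (forall i, (N <= i)%N -> a i = 0) &
    forall x, O x -> abs (h x - \sum_(i < N) a i * f i x) < 1].
Proof.
move=> hc hO.
have [n n1 hn] := H_unif hc ltr01.
have [hconst hinj hsurj] := Hbij n1.
have [lift hlift] := lift_ex.
have [rep hrep] : exists rep : {ffun 'I_n -> F} -> K, forall t,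
    O (rep t) /\ forall j : 'I_n, red (e j (rep t)) = t j.
  have hh : forall t : {ffun 'I_n -> F}, exists x, O x /\ forall j : 'I_n, red (e j x) = t j.
    by move=> t; have [x Ox hx] := hsurj t; exists x.
  by have [rep hr] := choice hh; exists rep.
pose tn (t : {ffun 'I_n -> F}) (j : nat) : F := if insub j is Some k then t k else 0.
have tnE : forall t (k : 'I_n), tn t k = t k by move=> t k; rewrite /tn valK.
have [B hB] := choice (fun t : {ffun 'I_n -> F} => rep_delta n (tn t)).
pose A i := \sum_(t : {ffun 'I_n -> F}) red (h (rep t)) * B t i.
exists (q ^ n)%N, (fun i => if (i < q ^ n)%N then lift (A i) else 0); split.
- by move=> i; case: ifP => _; [exact: (hlift _).1 | exact: O0].
- by move=> i hi; rewrite ltnNge hi.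
move=> x Ox.
have OS : O (\sum_(i < q ^ n) (if (i < q ^ n)%N then lift (A i) else 0) * f i x).
  apply: (O_sum (G := fun i => (if (i < q ^ n)%N then lift (A i) else 0) * f i x)) => i _.
  apply: OM; last exact: f_O.
  by case: ifP => _; [exact: (hlift _).1 | exact: O0].
apply/red_eqP => //; first exact: hO.
set r := fun j => red (e j x).
pose tx := [ffun j : 'I_n => r j].
have Orep := (hrep tx).1.
have e1 : red (h x) = red (h (rep tx)).
  apply/red_eqP; [exact: hO | exact: hO | apply: hn => //].
  apply: hinj => // j hj; rewrite ((hrep tx).2 (Ordinal hj)) ffunE.
  by [].
have delta : forall t : {ffun 'I_n -> F}, \prod_(j < n) ((r j == tn t j)%:R : F) = (t == tx)%:R.
  move=> t; case: (eqVneq t tx) => [->|ne].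
    by apply: big1 => j _; rewrite tnE ffunE eqxx.
  have [j hj] : exists j, t j != tx j.
    apply: contrapT => hn'; move/eqP: ne; apply; apply/ffunP => j.
    by apply/eqP; apply: contrapT => hj; apply: hn'; exists j; apply/negP.
  rewrite (bigD1 j) //= tnE; rewrite ffunE in hj; rewrite eq_sym (negPf hj) mul0r.
  by [].
have e2 : red (h (rep tx)) = \sum_(t : {ffun 'I_n -> F}) red (h (rep t)) * \prod_(j < n) ((r j == tn t j)%:R : F).
  rewrite (bigD1 tx) //= delta eqxx mulr1 big1 ?addr0 // => t ht.
  by rewrite delta (negPf ht) mulr0.
have e3 : \sum_(t : {ffun 'I_n -> F}) red (h (rep t)) * \prod_(j < n) ((r j == tn t j)%:R : F)
    = \sum_(i < q ^ n) A i * bfr n i r.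
  under eq_bigr do rewrite hB mulr_sumr.
  rewrite exchange_big /=; apply: eq_bigr => i _; rewrite /A mulr_suml.
  by apply: eq_bigr => t _; rewrite mulrA.
have e4 : red (\sum_(i < q ^ n) (if (i < q ^ n)%N then lift (A i) else 0) * f i x)
    = \sum_(i < q ^ n) A i * bfr n i r.
  rewrite (red_sum (G := fun i => (if (i < q ^ n)%N then lift (A i) else 0) * f i x)); last first.
    move=> i _; apply: OM; last exact: f_O.
    by case: ifP => _; [exact: (hlift _).1 | exact: O0].
  apply: eq_bigr => i _; rewrite ltn_ord redM; first last.
  - exact: f_O.
  - exact: (hlift _).1.
  by rewrite (hlift _).2 (red_f (n := n)).
by rewrite e1 e2 e3 e4.
Qed.


Lemma Opi k : O (pi ^+ k).
Proof. by apply: OX; rewrite /intO /= ltW // rho_lt1. Qed.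

Lemma expand_unit g : cont_on_O abs g -> (forall x, O x -> O (g x)) ->
  exists c : nat -> K, [/\ (forall i, O (c i)), abs_converges abs c 0,
    (forall eps, 0 < eps -> exists N, forall m, (N <= m)%N -> forall x, O x ->
        abs (g x - \sum_(n < m) c n * f n x) < eps) &
    ((exists x0, O x0 /\ abs (g x0) = 1) -> exists i, abs (c i) = 1)].
Proof.
move=> hg Og.
have hstep : forall hh : K -> K, exists p : nat * (nat -> K),
    (cont_on_O abs hh /\ forall x, O x -> O (hh x)) ->
    [/\ forall i, O (p.2 i), forall i, (p.1 <= i)%N -> p.2 i = 0 &
        forall x, O x -> abs (hh x - \sum_(i < p.1) p.2 i * f i x) < 1].
  move=> hh; case: (pselect (cont_on_O abs hh /\ forall x, O x -> O (hh x))) => [[h1 h2]|hn].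
    by have [N [a ha]] := L1 h1 h2; exists (N, a).
  by exists (0%N, fun _ => 0).
have [stp hstp] := choice hstep.
pose res (c : nat -> K) N k := fun x => (g x - \sum_(i < N) c i * f i x) / pi ^+ k.
pose S := nat_rect (fun _ => ((nat -> K) * nat)%type) ((fun _ => 0), 0%N)
   (fun k s => ((fun i => s.1 i + pi ^+ k * (stp (res s.1 s.2 k)).2 i),
                maxn s.2 (stp (res s.1 s.2 k)).1)).
have SS1 : forall k i, (S k.+1).1 i = (S k).1 i + pi ^+ k * (stp (res (S k).1 (S k).2 k)).2 i by [].
have SS2 : forall k, (S k.+1).2 = maxn (S k).2 (stp (res (S k).1 (S k).2 k)).1 by [].
pose Inv k := [/\ forall i, O ((S k).1 i), forall i, ((S k).2 <= i)%N -> (S k).1 i = 0 &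
   forall x, O x -> abs (g x - \sum_(i < (S k).2) (S k).1 i * f i x) <= rho ^+ k].
have pk0 : forall k, pi ^+ k != 0 by move=> k; rewrite expf_neq0 // pi_neq0.
have hres : forall k, Inv k -> cont_on_O abs (res (S k).1 (S k).2 k) /\
    forall x, O x -> O (res (S k).1 (S k).2 k x).
  move=> k [I1 I2 I3]; split.
    apply: (cont_ext (g := fun x => (pi ^+ k)^-1 * (g x - \sum_(i < (S k).2) (S k).1 i * f i x))).
      by move=> x; rewrite /res mulrC.
    apply: cont_scale; apply: cont_sub => //.
    apply: (cont_sum (G := fun i x => (S k).1 i * f i x)) => i _.
    by apply: cont_scale; apply: f_cont.
  move=> x Ox; rewrite /intO /= /res absM // absV // absX //.
  by rewrite ler_pdivrMr ?rhoX_gt0 // mul1r; apply: I3.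
have hInv : forall k, Inv k.
  elim=> [|k IH].
    split => //=; first by move=> i; exact: O0.
    by move=> x Ox; rewrite big_ord0 subr0 expr0; apply: Og.
  have [rc rO] := hres k IH.
  have [hp1 hp2 hp3] := hstp _ (conj rc rO).
  case: IH => [I1 I2 I3].
  split.
  - by move=> i; rewrite SS1; apply: OD => //; apply: OM => //; apply: Opi.
  - move=> i; rewrite SS2 geq_max => /andP [h1 h2].
    by rewrite SS1 I2 // hp2 // mulr0 addr0.
  move=> x Ox; rewrite SS2.
  set c := (S k).1; set N := (S k).2; set p := stp (res c N k).
  have eA : \sum_(i < maxn N p.1) (S k.+1).1 i * f i x =
      \sum_(i < N) c i * f i x + pi ^+ k * \sum_(i < p.1) p.2 i * f i x.
    under eq_bigr do rewrite SS1 mulrDl -mulrA.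
    rewrite big_split /= -mulr_sumr.
    rewrite (sum_stable (G := fun i => c i * f i x) (N := N)); last exact: leq_maxl.
      rewrite (sum_stable (G := fun i => p.2 i * f i x) (N := p.1)) //; last exact: leq_maxr.
      by move=> i hi; rewrite hp2 // mul0r.
    by move=> i hi; rewrite /c I2 // mul0r.
  rewrite eA.
  have eg : g x - \sum_(i < N) c i * f i x = pi ^+ k * res c N k x.
    by rewrite /res mulrC divfK.
  have -> : g x - (\sum_(i < N) c i * f i x + pi ^+ k * \sum_(i < p.1) p.2 i * f i x)
      = pi ^+ k * (res c N k x - \sum_(i < p.1) p.2 i * f i x).
    by rewrite mulrBr -eg; ring.
  rewrite absM // absX // exprSr ler_wpM2l ?rhoX_ge0 //.
  by apply: lt1_le_rho; apply: hp3.
have hcoef : forall i, exists l, forall k, abs (l - (S k).1 i) <= rho ^+ k.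
  move=> i; apply: geom_cauchy => k.
  rewrite SS1; have -> : forall a b : K, a + b - a = b by move=> a b; ring.
  have [rc rO] := hres k (hInv k).
  have [hp1 _ _] := hstp _ (conj rc rO).
  rewrite absM // absX // -[X in _ <= X]mulr1 ler_wpM2l ?rhoX_ge0 //.
  exact: hp1.
have [c hc] := choice hcoef.
exists c; split.
- by move=> i; have := hc i 0%N; rewrite /= subr0 expr0.
- move=> eps e0; have [k hk] := rhoX_small e0.
  exists (S k).2 => n hn; have [_ I2 _] := hInv k.
  by have := hc n k; rewrite I2 // subr0 => h; apply: le_lt_trans hk.
- move=> eps e0; have [k hk] := rhoX_small e0.
  exists (S k).2 => m hm x Ox; have [_ I2 I3] := hInv k.
  apply: le_lt_trans hk.
  have -> : g x - \sum_(n < m) c n * f n x =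
      (g x - \sum_(i < (S k).2) (S k).1 i * f i x) +
      \sum_(i < m) ((S k).1 i - c i) * f i x.
    rewrite -(sum_stable (G := fun i => (S k).1 i * f i x) (N := (S k).2) (M := m)) //; last first.
      by move=> i hi; rewrite I2 // mul0r.
    under [X in _ = _ + X]eq_bigr do rewrite mulrBl.
    rewrite sumrB; ring.
  apply: abs_add_le; [exact: Hna | exact: I3 |].
  apply: (abs_sum_le Hna (F := fun i => ((S k).1 i - c i) * f i x) (rhoX_ge0 k)) => i _.
  rewrite absM // -[X in _ <= X]mulr1; apply: ler_pM; [exact: abs_ge0 | exact: abs_ge0 | | exact: f_O].
  by rewrite (absB Hna).
move=> [x0 [Ox0 hx0]].
have [I1 _ I3] := hInv 1%N.
have [i hi] : exists i, ~ abs ((S 1).1 i) < 1.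
  apply: contrapT => hn.
  have hall : forall i, abs ((S 1).1 i) < 1 by move=> i; apply: contrapT => h; apply: hn; exists i.
  have hs : abs (\sum_(i < (S 1).2) (S 1).1 i * f i x0) < 1.
    apply: (abs_sum_lt Hna (F := fun i => (S 1).1 i * f i x0) ltr01) => j _.
    rewrite absM //; apply: le_lt_trans (hall j).
    by rewrite -[X in _ <= X]mulr1 ler_wpM2l ?abs_ge0 //; apply: f_O.
  have h1 : abs (g x0 - \sum_(i < (S 1).2) (S 1).1 i * f i x0) < 1.
    by apply: le_lt_trans (I3 x0 Ox0) _; rewrite expr1 rho_lt1.
  have := abs_add_lt Hna h1 hs; rewrite subrK hx0 ltxx.
  by [].
have ci1 : abs ((S 1).1 i) = 1.
  by apply/eqP; rewrite eq_le (I1 i) /= leNgt; apply/negP.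
exists i; have -> : c i = (S 1).1 i + (c i - (S 1).1 i) by ring.
rewrite abs_add_eq // ci1; apply: le_lt_trans (hc i 1%N) _.
by rewrite expr1 rho_lt1.
Qed.


Lemma sup_max (S : set R) M : S M -> (forall s, S s -> s <= M) -> sup S = M.
Proof.
move=> SM hub; apply/eqP; rewrite eq_le; apply/andP; split.
  by apply: ge_sup; [exists M | move=> y hy; apply: hub].
apply: sup_upper_bound => //; split; first by exists M.
by exists M => y hy; apply: hub.
Qed.

Lemma seq_argmax (T : eqType) (phi : T -> R) (t0 : T) (s : seq T) :
  exists t, forall u, u \in s -> phi u <= phi t.
Proof.
elim: s => [|a s [t ht]]; first by exists t0.
case: (lerP (phi a) (phi t)) => hat.
  by exists t => u; rewrite inE => /orP [/eqP ->|hu] //; apply: ht.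
exists a => u; rewrite inE => /orP [/eqP ->|hu] //.
by apply: le_trans (ht u hu) (ltW hat).
Qed.

Lemma main_basis : orthonormal_basis abs f.
Proof.
split; first exact: f_cont.
move=> g hg.
case: (pselect (forall x, O x -> g x = 0)) => [hz | hnz].
  exists (fun _ => 0); split.
  - by move=> eps e0; exists 0%N => n _; rewrite subr0 abs0.
  - move=> eps e0; exists 0%N => m _ x Ox; rewrite hz // big1 ?subr0 ?abs0 // => i _.
    by rewrite mul0r.
  rewrite /sup_norm (@sup_max _ 0); last first.
  - by move=> s [x Ox <-]; rewrite hz // abs0.
  - by exists 0; [exact: O0 | rewrite hz ?abs0 //; exact: O0].
  rewrite (@sup_max _ 0) //; first by exists 0%N => //; rewrite abs0.
  by move=> s [k _ <-]; rewrite abs0.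
have [x1 [Ox1 gx1]] : exists x1, O x1 /\ g x1 <> 0.
  apply: contrapT => hn; apply: hnz => x Ox; apply: contrapT => hx; apply: hn; exists x.
  by split.
set eps := abs (g x1).
have e0 : 0 < eps.
  by rewrite lt_def abs_ge0 // andbT; apply/eqP => /(abs_eq0 Hna).
have [n n1 hn] := H_unif hg e0.
have [_ hinj hsurj] := Hbij n1.
have [rep hrep] : exists rep : {ffun 'I_n -> F} -> K, forall t,
    O (rep t) /\ forall j : 'I_n, red (e j (rep t)) = t j.
  have hh : forall t : {ffun 'I_n -> F}, exists x, O x /\ forall j : 'I_n, red (e j x) = t j.
    by move=> t; have [x Ox hx] := hsurj t; exists x.
  by have [rep hr] := choice hh; exists rep.
pose tx x := [ffun j : 'I_n => red (e j x)].
have cls : forall x, O x -> abs (g x - g (rep (tx x))) < eps.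
  move=> x Ox; apply: hn => //; first exact: (hrep _).1.
  apply: hinj => //; first exact: (hrep _).1.
  by move=> j hj; rewrite ((hrep (tx x)).2 (Ordinal hj)) ffunE.
have [tm htm] := seq_argmax (fun t => abs (g (rep t))) [ffun _ => 0] (enum {: {ffun 'I_n -> F}}).
set x0 := rep tm; set M := abs (g x0).
have Ox0 : O x0 by exact: (hrep tm).1.
have hM : forall t, abs (g (rep t)) <= M by move=> t; apply: htm; rewrite mem_enum.
have epsM : eps <= M.
  apply: le_trans (hM (tx x1)); rewrite leNgt; apply/negP => hlt.
  have := abs_add_lt Hna (cls x1 Ox1) hlt; rewrite subrK ltxx.
  by [].
have bound : forall x, O x -> abs (g x) <= M.
  move=> x Ox; have -> : g x = (g x - g (rep (tx x))) + g (rep (tx x)) by rewrite subrK.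
  apply: abs_add_le; [exact: Hna | | exact: hM].
  exact: ltW (lt_le_trans (cls x Ox) epsM).
have M0 : 0 < M by apply: lt_le_trans epsM.
set lam := g x0.
have lam0 : lam != 0 by apply/eqP => h; move: M0; rewrite /M -/lam h abs0 // ltxx.
have absl : abs lam^-1 = M^-1 by rewrite absV.
pose g' x := lam^-1 * g x.
have hg' : cont_on_O abs g' by apply: cont_scale.
have Og' : forall x, O x -> O (g' x).
  move=> x Ox; rewrite /intO /= /g' absM // absl mulrC ler_pdivrMr // mul1r.
  exact: bound.
have g'x0 : abs (g' x0) = 1 by rewrite /g' absM // absl mulVf // gt_eqF.
have [c' [Oc' cv' unif' nrm']] := expand_unit hg' Og'.
have [i0 hi0] := nrm' (ex_intro _ x0 (conj Ox0 g'x0)).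
have eM : forall y, M * (y / M) = y by move=> y; rewrite mulrC divfK // gt_eqF.
exists (fun i => lam * c' i); split.
- move=> eps' e'0; have [N hN] := cv' (eps' / M) (divr_gt0 e'0 M0).
  exists N => k hk; have := hN k hk; rewrite !subr0 absM // -/M => h.
  by rewrite -(eM eps') ltr_pM2l.
- move=> eps' e'0; have [N hN] := unif' (eps' / M) (divr_gt0 e'0 M0).
  exists N => m hm x Ox; have := hN m hm x Ox => h.
  have -> : g x - \sum_(k < m) lam * c' k * f k x = lam * (g' x - \sum_(k < m) c' k * f k x).
    rewrite mulrBr /g' mulrA mulfV // mul1r mulr_sumr; congr (_ - _).
    by apply: eq_bigr => k _; rewrite mulrA.
  by rewrite absM // -/M -(eM eps') ltr_pM2l.
rewrite /sup_norm (@sup_max _ M); last first.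
- by move=> s [x Ox <-]; apply: bound.
- by exists x0.
rewrite (@sup_max _ M) //.
  by exists i0 => //; rewrite absM // hi0 mulr1.
move=> s [k _ <-]; rewrite absM // -/M -[X in _ <= X]mulr1 ler_wpM2l //; [exact: ltW | exact: (Oc' k)].
Qed.

End Local.

Unset Implicit Arguments.

Theorem theorem3p3 (R : realType) (K : fieldType) (abs : K -> R)
  (F : finFieldType) (red : K -> F) (H : nat -> set K) (e : nat -> K -> K) :
  local_field abs red ->
  (forall n, (1 <= n)%N -> open_subgroup_O abs (H n)) ->
  (forall n, (1 <= n)%N -> H n.+1 `<=` H n) ->
  (forall x, (forall n, (1 <= n)%N -> H n x) <-> x = 0) ->
  (forall j, cont_on_O abs (e j) /\ (forall x, intO abs x -> intO abs (e j x))) ->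
  (forall n, (1 <= n)%N ->
     [/\ (* reductions constant on cosets of H_n *)
         (forall x y, intO abs x -> intO abs y -> H n (x - y) ->
            forall j, (j < n)%N -> red (e j x) = red (e j y)),
         (* induced map O/H_n -> F^n injective *)
         (forall x y, intO abs x -> intO abs y ->
            (forall j, (j < n)%N -> red (e j x) = red (e j y)) -> H n (x - y)) &
         (* induced map O/H_n -> F^n surjective *)
         (forall t : 'I_n -> F, exists2 x, intO abs x &
            forall j : 'I_n, red (e j x) = t j)]) ->
  orthonormal_basis abs (digit_ext #|F| e).
Proof.
move=> [Hna [pi [Hpi Hdisc]] Hcomp Hres] HH Hdec Hcap He Hbij.
exact: (main_basis Hna Hpi Hdisc Hcomp Hres HH Hdec Hcap He Hbij).
Qed.
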